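(* Let $X$ be a space possessing a binary normal closed subbase $\mathcal S$, and let $Z$ be an arbitrary space. Then every $\mathcal S$-continuous set-valued map $\Phi\colon Z\to X$ whose values $\Phi(z)$, $z\in Z$, are (nonempty) closed $\mathcal S$-convex subsets of $X$ has a continuous single-valued selection, i.e. a continuous map $h\colon Z\to X$ with $h(z)\in\Phi(z)$ for all $z\in Z$. More generally, if $A\subset Z$ is closed and every continuous map from $A$ to $X$ can be extended to a continuous map from $Z$ to $X$, then every continuous selection $g\colon A\to X$ for $\Phi|A$ extends to a continuous selection $h\colon Z\to X$ for $\Phi$ (i.e. $h|A=g$).
   Context: All spaces are Tychonoff; single-valued maps are continuous; set-valued maps have nonempty values. A family $\mathcal S$ of closed subsets of $X$ is a closed subbase if every closed subset of $X$ is an intersection of finite unions of members of $\mathcal S$. A family of sets is linked if any two of its members intersect; $\mathcal S$ is binary if every linked subfamily of $\mathcal S$ has nonempty intersection. $\mathcal S$ is normal if for every $S_0,S_1\in\mathcal S$ with $S_0\cap S_1=\varnothing$ there exist $T_0,T_1\in\mathcal S$ with $S_0\cap T_1=\varnothing=T_0\cap S_1$ and $T_0\cup T_1=X$. For $B\subset X$ let $I_{\mathcal S}(B)=\bigcap\{S\in\mathcal S: B\subset S\}$. A set $B\subset X$ is $\mathcal S$-convex if $I_{\mathcal S}(\{x,y\})\subset B$ for all $x,y\in B$. A set-valued map $\Phi\colon Z\to X$ is $\mathcal S$-continuous if for every $S\in\mathcal S$ both sets $\{z\in Z:\Phi(z)\cap(X\setminus S)\neq\varnothing\}$ and $\{z\in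 Z:\Phi(z)\subset X\setminus S\}$ are open in $Z$. *)

(* Defs.v *)
From HB Require Import structures.
From mathcomp Require Import all_boot all_order all_algebra.
From mathcomp Require Import all_classical all_reals all_analysis.
Set Implicit Arguments. Unset Strict Implicit. Unset Printing Implicit Defensive.
Import Order.TTheory GRing.Theory Num.Theory.
Local Open Scope classical_set_scope.

Definition tychonoff_space (T : topologicalType) : Prop :=
  completely_regular_space T /\ hausdorff_space T.

Section subbase.
Context {X : topologicalType}.
Implicit Types (S : set (set X)) (B : set X).

Definition finite_union_of S (G : set X) : Prop :=
  exists s : seq (set X), (forall A, A \in s -> S A) /\
    G = \big[setU/set0]_(A <- s) A.

Definition closed_subbase S : Prop :=
  (forall A, S A -> closed A) /\
  (forall F, closed F -> exists G : set (set X),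
      (forall U, G U -> finite_union_of S U) /\ F = \bigcap_(U in G) U).

Definition linked (L : set (set X)) : Prop :=
  forall A B, L A -> L B -> A `&` B !=set0.

Definition binary S : Prop :=
  forall L : set (set X), L `<=` S -> linked L -> \bigcap_(A in L) A !=set0.

Definition normal_family S : Prop :=
  forall S0 S1 : set X, S S0 -> S S1 -> S0 `&` S1 = set0 ->
    exists T0 T1 : set X, [/\ S T0, S T1, S0 `&` T1 = set0, T0 `&` S1 = set0
                    & T0 `|` T1 = setT].

Definition I_S S B : set X := \bigcap_(A in [set A | S A /\ B `<=` A]) A.

Definition S_convex S B : Prop :=
  forall x y, B x -> B y -> I_S S [set x; y] `<=` B.

Definition S_continuous {Z : topologicalType} S (Phi : Z -> set X) : Prop :=
  forall A, S A ->
    open [set z | Phi z `&` ~` A !=set0] /\ open [set z | Phi z `<=` ~` A].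
End subbase.

(* Main.v *)
Require Import Defs.
From HB Require Import structures.
From mathcomp Require Import all_boot all_order all_algebra.
From mathcomp Require Import all_classical all_reals all_analysis.
From mathcomp Require Import zify.
Local Open Scope classical_set_scope.
Set Implicit Arguments. Unset Strict Implicit.

Lemma bigU_nth {X : Type} (s : seq (set X)) x :
  (\big[setU/set0]_(A <- s) A) x <-> exists i, (i < size s)%N /\ nth set0 s i x.
Proof.
elim: s => [|A s IH]; rewrite ?big_nil ?big_cons /=.
  by split => [//|[i []]].
split.
  case=> [Ax|/IH [i [hi hx]]]; [by exists 0%N | by exists i.+1].
by case => -[|i] /= [hi hx]; [left | right; apply/IH; exists i].
Qed.

Lemma notne0 {X : Type} (B : set X) : ~ (B !=set0) -> B = set0.
Proof. by move=> h; apply/seteqP; split => // x Bx; apply: h; exists x. Qed.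

Lemma sep_closed {X : topologicalType} (S : set (set X)) : closed_subbase S ->
  forall (F : set X) y, closed F -> ~ F y ->
  exists s : seq (set X), (forall i, (i < size s)%N -> S (nth set0 s i)) /\
    F `<=` \big[setU/set0]_(A <- s) A /\ ~ (\big[setU/set0]_(A <- s) A) y.
Proof.
move=> cS F y cF Fy.
have [G [HG FE]] := cS.2 F cF.
have [U [GU Uy]] : exists U, G U /\ ~ U y.
  apply: contrapT => H; apply: Fy; rewrite FE => U GU.
  by apply: contrapT => nU; apply: H; exists U.
have [s [hs UE]] := HG U GU.
exists s; split.
  by move=> i hi; apply: hs; apply: mem_nth.
rewrite -UE; split => // x; rewrite FE; exact.
Qed.

Lemma pt_sep {X : topologicalType} (S : set (set X)) : closed_subbase S ->
  hausdorff_space X -> forall p y : X, p <> y -> exists T, S T /\ T p /\ ~ T y.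
Proof.
move=> cS hX p y py.
have c1 : closed [set p] by apply: accessible_closed_set1; apply: hausdorff_accessible.
have [s [hs [sub Uy]]] := sep_closed cS c1 (nesym py).
have /bigU_nth [i [hi hx]] := sub p erefl.
exists (nth set0 s i); split; [exact: hs|split => // Ty].
by apply: Uy; apply/bigU_nth; exists i.
Qed.

Lemma disj_sep {X : topologicalType} (S : set (set X)) : closed_subbase S ->
  hausdorff_space X -> binary S -> normal_family S ->
  forall A y, S A -> ~ A y -> exists T, S T /\ T y /\ T `&` A = set0.
Proof.
move=> cS hX bS nS A y SA Ay.
case: (pselect (A !=set0)) => [[a Aa]|A0]; last first.
  have A0' := notne0 A0.
  have e : A `&` A = set0 by rewrite A0' setI0.
  have [T0 [T1 [ST0 ST1 _ _ U]]] := nS A A SA SA e.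
  have : (T0 `|` T1) y by rewrite U.
  by case=> Ty; [exists T0| exists T1]; rewrite A0' setI0.
apply: contrapT => H.
have H' : forall T, S T -> T y -> T `&` A !=set0.
  by move=> T ST Ty; apply: contrapT => /notne0 e; apply: H; exists T.
pose L := [set T | (S T /\ T y) \/ T = A].
have [z Lz] : \bigcap_(T in L) T !=set0.
  apply: bS.
    by move=> T [[]|->].
  move=> T1 T2 [[S1 y1]|->] [[S2 y2]|->].
  - by exists y.
  - exact: H'.
  - by rewrite setIC; apply: H'.
  - by exists a.
have zy : z = y.
  apply: contrapT => zy.
  have [T [ST [Ty Tz]]] := pt_sep cS hX (nesym zy).
  by apply: Tz; apply: Lz; left.
by apply: Ay; rewrite -zy; apply: Lz; right.
Qed.

Lemma two_pt {X : topologicalType} (S : set (set X)) : binary S ->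
  forall C, S_convex S C -> forall a b, C a -> C b ->
  forall L, L `<=` S -> linked L -> (forall T, L T -> T a \/ T b) ->
  exists q, C q /\ forall T, L T -> T q.
Proof.
move=> bS C hC a b Ca Cb L LS Ll HL.
pose M := [set T | L T \/ (S T /\ T a /\ T b)].
have [q Mq] : \bigcap_(T in M) T !=set0.
  apply: bS.
    by move=> T [/LS|[]].
  move=> T1 T2 [L1|[S1 [a1 b1]]] [L2|[S2 [a2 b2]]].
  - exact: Ll.
  - by case: (HL _ L1) => h; [exists a|exists b].
  - by case: (HL _ L2) => h; [exists a|exists b].
  - by exists a.
exists q; split; last by move=> T LT; apply: Mq; left.
apply: (hC a b Ca Cb) => A [SA abA]; apply: Mq; right; split => //.
by split; apply: abA; [left|right].
Qed.

Lemma finite_pt {X : topologicalType} (S : set (set X)) : binary S ->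
  forall C, S_convex S C -> forall c0, C c0 -> forall (F : nat -> X) n,
  (forall i, (i < n)%N -> C (F i)) ->
  forall L, L `<=` S -> linked L -> (forall T, L T -> exists i, (i < n)%N /\ T (F i)) ->
  exists q, C q /\ forall T, L T -> T q.
Proof.
move=> bS C hC c0 Cc0 F n; elim: n => [|n IH] hF L LS Ll HL.
  by exists c0; split => // T /HL [i []].
pose L1 := [set T | L T /\ exists i, (i < n)%N /\ T (F i)].
have [p [Cp Hp]] : exists q, C q /\ forall T, L1 T -> T q.
  apply: IH.
  - by move=> i hi; apply: hF; lia.
  - by move=> T [/LS].
  - by move=> T1 T2 [L1' _] [L2' _]; apply: Ll.
  - by move=> T [].
apply: (two_pt bS hC Cp (hF n (ltnSn n))) => // T LT.
have [i [hi Ti]] := HL T LT.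
case: (ltnP i n) => hin.
  by left; apply: Hp; split => //; exists i.
by right; have -> : n = i by lia.
Qed.

Lemma conv_sep {X : topologicalType} (S : set (set X)) : closed_subbase S ->
  hausdorff_space X -> binary S -> normal_family S ->
  forall C, closed C -> C !=set0 -> S_convex S C ->
  forall y, ~ C y -> exists A, S A /\ C `<=` A /\ ~ A y.
Proof.
move=> cS hX bS nS C cC [c0 Cc0] hC y Cy.
apply: contrapT => Hn.
have Hn' : forall A, S A -> C `<=` A -> A y.
  by move=> A SA CA; apply: contrapT => Ay; apply: Hn; exists A.
have [s [hs [Csub Uy]]] := sep_closed cS cC Cy.
have H : forall i, exists pr : set X * X, (i < size s)%N ->
    [/\ S pr.1, pr.1 y, nth set0 s i `&` pr.1 = set0, C pr.2 & pr.1 pr.2].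
  move=> i; case: (ltnP i (size s)) => hi; last by exists (setT, y).
  have Ai : ~ nth set0 s i y by move=> h; apply: Uy; apply/bigU_nth; exists i.
  have [T [ST [Ty TA]]] := disj_sep cS hX bS nS (hs i hi) Ai.
  have e : nth set0 s i `&` T = set0 by rewrite setIC.
  have [P0 [P1 [SP0 SP1 e1 e2 U]]] := nS _ _ (hs i hi) ST e.
  have [a [Ca P0a]] : exists a, C a /\ ~ P0 a.
    apply: contrapT => h; have : P0 y.
      apply: Hn' => // x Cx; apply: contrapT => P0x; apply: h; by exists x.
    move=> P0y; have : (P0 `&` T) y by [].
    by rewrite e2.
  have P1a : P1 a.
    have : (P0 `|` P1) a by rewrite U.
    by case.
  have P1y : P1 y.
    have : (P0 `|` P1) y by rewrite U.
    case=> // P0y; have : (P0 `&` T) y by [].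
    by rewrite e2.
  by exists (P1, a).
have [f Hf] := choice H.
pose L := [set T | exists i, (i < size s)%N /\ T = (f i).1].
have [q [Cq Lq]] : exists q, C q /\ forall T, L T -> T q.
  apply: (finite_pt bS hC Cc0 (F := fun i => (f i).2) (n := size s)).
  - by move=> i hi; have [] := Hf i hi.
  - by move=> T [i [hi ->]]; have [] := Hf i hi.
  - move=> T1 T2 [i [hi ->]] [j [hj ->]]; exists y.
    by have [_ ? _ _ _] := Hf i hi; have [_ ? _ _ _] := Hf j hj.
  - move=> T [i [hi ->]]; exists i; split => //.
    by have [] := Hf i hi.
have /bigU_nth [i [hi hq]] := Csub q Cq.
have [_ _ e _ _] := Hf i hi.
have : (nth set0 s i `&` (f i).1) q by split => //; apply: Lq; exists i.
by rewrite e.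
Qed.

Definition Lg {X : topologicalType} (S : set (set X)) (C : set X) (x : X) :=
  [set T | S T /\ ((T x /\ T `&` C !=set0) \/ C `<=` T)].

Lemma gate_ex {X : topologicalType} (S : set (set X)) : binary S ->
  forall C x, C !=set0 -> exists p, (\bigcap_(T in Lg S C x) T) p.
Proof.
move=> bS C x [c0 Cc0].
apply: bS; first by move=> T [].
move=> T1 T2 [_ [[x1 [c c1]]|C1]] [_ [[x2 [d d2]]|C2]].
- by exists x.
- by case: c1 => ? ?; exists c; split => //; apply: C2.
- by case: d2 => ? ?; exists d; split => //; apply: C1.
- by exists c0; split; [apply: C1|apply: C2].
Qed.

Lemma gate_in {X : topologicalType} (S : set (set X)) : closed_subbase S ->
  hausdorff_space X -> binary S -> normal_family S ->
  forall C x p, closed C -> C !=set0 -> S_convex S C ->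
  (\bigcap_(T in Lg S C x) T) p -> C p.
Proof.
move=> cS hX bS nS C x p cC C0 hC Hp.
apply: contrapT => Cp.
have [A [SA [CA Ap]]] := conv_sep cS hX bS nS cC C0 hC Cp.
by apply: Ap; apply: Hp; split => //; right.
Qed.

Lemma gate_self {X : topologicalType} (S : set (set X)) C x :
  C x -> (\bigcap_(T in Lg S C x) T) x.
Proof. by move=> Cx T [_ [[]|CT]] //; apply: CT. Qed.

Lemma gate_uniq {X : topologicalType} (S : set (set X)) : closed_subbase S ->
  hausdorff_space X -> binary S -> normal_family S ->
  forall C x p q, closed C -> C !=set0 -> S_convex S C ->
  (\bigcap_(T in Lg S C x) T) p -> (\bigcap_(T in Lg S C x) T) q -> p = q.
Proof.
move=> cS hX bS nS C x p q cC C0 hC Hp Hq.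
have Cp := gate_in cS hX bS nS cC C0 hC Hp.
have Cq := gate_in cS hX bS nS cC C0 hC Hq.
apply: contrapT => pq.
have [T [ST [Tp Tq]]] := pt_sep cS hX pq.
have [T' [ST' [T'q T'T]]] := disj_sep cS hX bS nS ST Tq.
have e : T `&` T' = set0 by rewrite setIC.
have [T0 [T1 [ST0 ST1 e1 e2 U]]] := nS _ _ ST ST' e.
have T0p : T0 p.
  have : (T0 `|` T1) p by rewrite U.
  case=> // T1p; have : (T `&` T1) p by [].
  by rewrite e1.
have T1q : T1 q.
  have : (T0 `|` T1) q by rewrite U.
  case=> // T0q; have : (T0 `&` T') q by [].
  by rewrite e2.
have : (T0 `|` T1) x by rewrite U.
case=> Tx.
- have : T0 q by apply: Hq; split => //; left; split => //; exists p.
  by move=> T0q; have : (T0 `&` T') q by []; rewrite e2.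
- have : T1 p by apply: Hp; split => //; left; split => //; exists q.
  by move=> T1p; have : (T `&` T1) p by []; rewrite e1.
Qed.

Lemma gate_cont1 {X Z : topologicalType} (S : set (set X)) : closed_subbase S ->
  hausdorff_space X -> binary S -> normal_family S ->
  forall (Phi : Z -> set X), S_continuous S Phi ->
  forall G : Z -> X, continuous G ->
  forall h : Z -> X, (forall z, (\bigcap_(T in Lg S (Phi z) (G z)) T) (h z)) ->
  forall z0 A, S A -> ~ A (h z0) -> nbhs z0 [set z | ~ A (h z)].
Proof.
move=> cS hX bS nS Phi cPhi G cG h hh z0 A SA Ap.
have [T [ST [Tp TA]]] := disj_sep cS hX bS nS SA Ap.
have [T0 [T1 [ST0 ST1 e1 e2 U]]] := nS _ _ ST SA TA.
have cov : forall w, ~ T1 w -> T0 w.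
  move=> w nw; have : (T0 `|` T1) w by rewrite U.
  by case.
have nT1 : ~ T1 (h z0).
  by move=> T1p; have : (T `&` T1) (h z0) by []; rewrite e1.
have notL : ~ Lg S (Phi z0) (G z0) T1 by move=> /hh.
have key : forall z, Lg S (Phi z) (G z) T0 -> ~ A (h z).
  by move=> z /hh T0z Az; have : (T0 `&` A) (h z) by []; rewrite e2.
have cT1 : closed T1 by apply: cS.1.
case: (pselect (T1 (G z0))) => GT1.
- have sub : Phi z0 `<=` ~` T1.
    move=> w Pw T1w; apply: notL; split => //; left; split => //.
    by exists w.
  have nb : nbhs z0 [set z | Phi z `<=` ~` T1].
    by apply: open_nbhs_nbhs; split => //; apply: (cPhi T1 ST1).2.
  apply: filterS nb => z Pz; apply: key; split => //; right.
  by move=> w /Pz /cov.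
- have [w [Pw T1w]] : exists w, Phi z0 w /\ ~ T1 w.
    apply: contrapT => H; apply: notL; split => //; right => w Pw.
    by apply: contrapT => T1w; apply: H; exists w.
  have nb1 : nbhs z0 [set z | Phi z `&` ~` T1 !=set0].
    by apply: open_nbhs_nbhs; split; [apply: (cPhi T1 ST1).1 | exists w].
  have nb2 : nbhs z0 (G @^-1` (~` T1)).
    apply: (cG z0); apply: open_nbhs_nbhs; split => //.
    exact: closed_openC.
  apply: filterS (filterI nb1 nb2) => z [[v [Pv T1v]] GzT1].
  apply: key; split => //; left; split; first exact: cov.
  by exists v; split => //; apply: cov.
Qed.

Lemma gate_cont {X Z : topologicalType} (S : set (set X)) : closed_subbase S ->
  hausdorff_space X -> binary S -> normal_family S ->
  forall (Phi : Z -> set X), S_continuous S Phi ->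
  forall G : Z -> X, continuous G ->
  forall h : Z -> X, (forall z, (\bigcap_(T in Lg S (Phi z) (G z)) T) (h z)) ->
  continuous h.
Proof.
move=> cS hX bS nS Phi cPhi G cG h hh.
have fin : forall z0 (s : seq (set X)), (forall i, (i < size s)%N -> S (nth set0 s i)) ->
    ~ (\big[setU/set0]_(A <- s) A) (h z0) ->
    nbhs z0 [set z | ~ (\big[setU/set0]_(A <- s) A) (h z)].
  move=> z0; elim => [|A s IH] hs.
    move=> _; rewrite big_nil.
    have -> : [set z | ~ (set0 : set X) (h z)] = setT by apply/seteqP; split => // z _ [].
    exact: filterT.
  rewrite big_cons => nU.
  have nA : ~ A (h z0) by move=> ?; apply: nU; left.
  have nU' : ~ (\big[setU/set0]_(A <- s) A) (h z0) by move=> ?; apply: nU; right.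
  have h1 := gate_cont1 cS hX bS nS cPhi cG hh (hs 0%N erefl) nA.
  have h2 := IH (fun i hi => hs i.+1 hi) nU'.
  by apply: filterS (filterI h1 h2) => z [? ?] [].
apply/continuousP => O oO; rewrite openE => z Oz.
have cF : closed (~` O) by rewrite -openC setCK.
have nF : ~ (~` O) (h z) by [].
have [s [hs [sub Uy]]] := sep_closed cS cF nF.
apply: filterS (fin z s hs Uy) => w nU.
by apply: contrapT => Ow; apply: nU; apply: sub.
Qed.

Lemma main_sel {X Z : topologicalType} (S : set (set X)) : closed_subbase S ->
  hausdorff_space X -> binary S -> normal_family S ->
  forall (Phi : Z -> set X),
  (forall z, Phi z !=set0 /\ closed (Phi z) /\ S_convex S (Phi z)) ->
  S_continuous S Phi ->
  forall G : Z -> X, continuous G ->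
  exists h : Z -> X, continuous h /\ (forall z, Phi z (h z)) /\
    (forall z, Phi z (G z) -> h z = G z).
Proof.
move=> cS hX bS nS Phi hPhi cPhi G cG.
have H : forall z, exists p, (\bigcap_(T in Lg S (Phi z) (G z)) T) p.
  by move=> z; apply: gate_ex => //; case: (hPhi z).
have [h hh] := choice H.
exists h; split; first exact: (gate_cont cS hX bS nS cPhi cG hh).
split.
  move=> z; have [? [? ?]] := hPhi z.
  exact: (gate_in cS hX bS nS _ _ _ (hh z)).
move=> z Pz; have [? [? ?]] := hPhi z.
by apply: (gate_uniq cS hX bS nS _ _ _ (hh z)) => //; apply: gate_self.
Qed.

Unset Implicit Arguments.
Set Strict Implicit.

Theorem theorem1p1 (X Z : topologicalType) (S : set (set X)) :
  tychonoff_space X -> tychonoff_space Z ->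
  closed_subbase S -> binary S -> normal_family S ->
  (forall Phi : Z -> set X,
     (forall z, Phi z !=set0 /\ closed (Phi z) /\ S_convex S (Phi z)) ->
     S_continuous S Phi ->
     exists h : Z -> X, continuous h /\ forall z, Phi z (h z)) /\
  (forall A : set Z, closed A ->
     (forall g : Z -> X, {within A, continuous g} ->
        exists h : Z -> X, continuous h /\ {in A, h =1 g}) ->
   forall Phi : Z -> set X,
     (forall z, Phi z !=set0 /\ closed (Phi z) /\ S_convex S (Phi z)) ->
     S_continuous S Phi ->
   forall g : Z -> X, {within A, continuous g} -> (forall a, A a -> Phi a (g a)) ->
     exists h : Z -> X, continuous h /\ (forall z, Phi z (h z)) /\ {in A, h =1 g}).
Proof.
move=> [_ hX] _ cS bS nS; split.
  move=> Phi hPhi cPhi.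
  have [x0 _] : \bigcap_(A in (set0 : set (set X))) A !=set0.
    by apply: bS => // ? ? [].
  have [h [ch [Ph _]]] := main_sel cS hX bS nS hPhi cPhi (@cst_continuous Z X x0).
  by exists h.
move=> A cA ext Phi hPhi cPhi g cg Pg.
have [G [cG GA]] := ext g cg.
have [h [ch [Ph hG]]] := main_sel cS hX bS nS hPhi cPhi cG.
exists h; split => //; split => // a Aa.
rewrite hG (GA a Aa) //.
by apply: Pg; rewrite -in_setE.
Qed.
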